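(* If $(H,R)$ is a semiquasitriangular Hopf algebra, then $R_{12}R_{13}R_{23}=R_{23}R_{13}R_{12}$ in $H\otimes H\otimes H$.
   Context: All vector spaces are over a field $k$, $\otimes=\otimes_k$. For a Hopf algebra $H$ with comultiplication $\Delta$, counit $\epsilon$, antipode $S$, we use Sweedler notation $\Delta(h)=h_1\otimes h_2$, etc. $\operatorname{Z}(H)$ is the centre of $H$. For $R\in H\otimes H$ we write $R=R^{(1)}\otimes R^{(2)}$ (summation understood); $R'^{(1)}\otimes R'^{(2)}$ denotes another copy of $R$. $R_{12}=R^{(1)}\otimes R^{(2)}\otimes 1$, $R_{13}=R^{(1)}\otimes 1\otimes R^{(2)}$, $R_{23}=1\otimes R^{(1)}\otimes R^{(2)}$. Definition (semiquasitriangular Hopf algebra): a pair $(H,R)$ with $H$ a Hopf algebra with bijective antipode and $R\in H\otimes H$ invertible such that (1) $R^{(1)}_1\otimes R^{(1)}_2\otimes R^{(2)} = R^{(1)}\otimes R'^{(1)}\otimes R^{(2)}R'^{(2)}$; (2) $R^{(1)}\otimes R^{(2)}_1\otimes R^{(2)}_2 = R^{(1)}R'^{(1)}\otimes R'^{(2)}\otimes R^{(2)}$; (3) $R^{(1)}\otimes R^{(2)}_2R'^{(1)}\otimes R^{(2)}_1R'^{(2)} = R^{(1)}\otimes R'^{(1)}R^{(2)}_1\otimes R'^{(2)}R^{(2)}_2$; (4) $R^{(1)}_2R'^{(1)}\otimes R^{(1)}_1R'^{(2)}\otimes R^{(2)} = R'^{(1)}R^{(1)}_1\otimes R'^{(2)}R^{(1)}_2\otimes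 R^{(2)}$; (5) $\nu(h):=R^{(2)}h_2R'^{(2)}\otimes S(h_1)S(R^{(1)})h_3R'^{(1)}\in H\otimes\operatorname{Z}(H)$ for all $h\in H$; (6) $\nu(h)=R^{(1)}h_2R'^{(1)}\otimes S(R'^{(2)})S(h_1)R^{(2)}h_3$ for all $h\in H$. *)

(* Defs.v *)
From HB Require Import structures.
From mathcomp Require Import all_boot all_order all_algebra.
Set Implicit Arguments. Unset Strict Implicit. Unset Printing Implicit Defensive.
Import GRing.Theory.
Local Open Scope ring_scope.

Section Tensors.
Variables (k : fieldType) (H : algType k).

(* A tensor in H (x) H (resp. H (x) H (x) H) is represented by a finite list of
   simple tensors, read as their sum. *)
Definition tens2 := seq (H * H).
Definition tens3 := seq (H * H * H).

(* Evaluation against linear functionals: the canonical map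
   H (x) H -> Bil(dual H, dual H), which is injective over a field.  Two
   representatives denote the same element of the tensor product iff they
   have the same evaluations. *)
Definition ev2 (f g : {scalar H}) (t : tens2) : k :=
  \sum_(p <- t) f p.1 * g p.2.
Definition ev3 (f g h : {scalar H}) (t : tens3) : k :=
  \sum_(p <- t) f p.1.1 * g p.1.2 * h p.2.

Definition teq2 (t u : tens2) : Prop := forall f g, ev2 f g t = ev2 f g u.
Definition teq3 (t u : tens3) : Prop := forall f g h, ev3 f g h t = ev3 f g h u.

Definition mul2 (t u : tens2) : tens2 :=
  [seq (p.1 * q.1, p.2 * q.2) | p <- t, q <- u].
Definition mul3 (t u : tens3) : tens3 :=
  [seq (p.1.1 * q.1.1, p.1.2 * q.1.2, p.2 * q.2) | p <- t, q <- u].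

Definition scale2 (a : k) (t : tens2) : tens2 := [seq (a *: p.1, p.2) | p <- t].

Definition leg12 (R : tens2) : tens3 := [seq (p.1, p.2, 1) | p <- R].
Definition leg13 (R : tens2) : tens3 := [seq (p.1, 1, p.2) | p <- R].
Definition leg23 (R : tens2) : tens3 := [seq (1, p.1, p.2) | p <- R].

Definition central (z : H) : Prop := forall x : H, x * z = z * x.

Variables (Delta : H -> tens2) (eps : {scalar H}) (S : {linear H -> H}).

Definition DeltaL (t : tens2) : tens3 :=
  flatten [seq [seq (q.1, q.2, p.2) | q <- Delta p.1] | p <- t].
Definition DeltaR (t : tens2) : tens3 :=
  flatten [seq [seq (p.1, q.1, q.2) | q <- Delta p.2] | p <- t].

Definition Delta3 (h : H) : tens3 := DeltaL (Delta h).

Definition is_hopf : Prop :=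
      (forall (a : k) (x y : H), teq2 (Delta (a *: x + y)) (scale2 a (Delta x) ++ Delta y)) /\
      (forall x y : H, teq2 (Delta (x * y)) (mul2 (Delta x) (Delta y))) /\
      teq2 (Delta 1) [:: (1, 1)] /\
      (forall x : H, teq3 (DeltaL (Delta x)) (DeltaR (Delta x))) /\
      (forall x : H, \sum_(p <- Delta x) eps p.1 *: p.2 = x /\
                     \sum_(p <- Delta x) eps p.2 *: p.1 = x) /\
      ((forall x y : H, eps (x * y) = eps x * eps y) /\ eps 1 = 1) /\
      (forall x : H, \sum_(p <- Delta x) S p.1 * p.2 = eps x *: 1 /\
                     \sum_(p <- Delta x) p.1 * S p.2 = eps x *: 1).

Definition tinvertible (R : tens2) : Prop :=
  exists Ri : tens2, teq2 (mul2 R Ri) [:: (1, 1)] /\ teq2 (mul2 Ri R) [:: (1, 1)].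

(* nu(h) = R^(2) h_2 R'^(2) (x) S(h_1) S(R^(1)) h_3 R'^(1) *)
Definition nu (R : tens2) (h : H) : tens2 :=
  [seq (rs.1.2 * x.1.2 * rs.2.2, S x.1.1 * S rs.1.1 * x.2 * rs.2.1)
  | x <- Delta3 h, rs <- [seq (r, s) | r <- R, s <- R]].

Definition semiquasitriangular (R : tens2) : Prop :=
  is_hopf /\ bijective S /\ tinvertible R /\
      teq3 (DeltaL R) [seq (r.1, s.1, r.2 * s.2) | r <- R, s <- R] /\
      teq3 (DeltaR R) [seq (r.1 * s.1, s.2, r.2) | r <- R, s <- R] /\
      teq3 [seq (r.1, bs.1.2 * bs.2.1, bs.1.1 * bs.2.2)
             | r <- R, bs <- [seq (b, s) | b <- Delta r.2, s <- R]]
           [seq (r.1, bs.2.1 * bs.1.1, bs.2.2 * bs.1.2)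
             | r <- R, bs <- [seq (b, s) | b <- Delta r.2, s <- R]] /\
      teq3 [seq (as_.1.2 * as_.2.1, as_.1.1 * as_.2.2, r.2)
             | r <- R, as_ <- [seq (a, s) | a <- Delta r.1, s <- R]]
           [seq (as_.2.1 * as_.1.1, as_.2.2 * as_.1.2, r.2)
             | r <- R, as_ <- [seq (a, s) | a <- Delta r.1, s <- R]] /\
      (forall h : H, exists t : tens2,
          (forall p, p \in t -> central p.2) /\ teq2 (nu R h) t) /\
      (forall h : H, teq2 (nu R h)
         [seq (rs.1.1 * x.1.2 * rs.2.1, S rs.2.2 * S x.1.1 * rs.1.2 * x.2)
         | x <- Delta3 h, rs <- [seq (r, s) | r <- R, s <- R]]).

End Tensors.

(* Main.v *)
From HB Require Import structures.
Require Import Defs.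
From mathcomp Require Import all_boot all_order all_algebra.
Import GRing.Theory.
Local Open Scope ring_scope.

Section Aux. Variables (k:fieldType) (H:algType k) (g : {scalar H}) (t : H).
Definition gr (x:H) : k := g (x * t).
Definition gl (x:H) : k := g (t * x).
Fact gr_lin : linear_for *%R gr. Proof. by move=> a x y; rewrite /gr mulrDl -scalerAl linearP. Qed.
Fact gl_lin : linear_for *%R gl. Proof. by move=> a x y; rewrite /gl mulrDr -scalerAr linearP. Qed.
HB.instance Definition _ := GRing.isLinear.Build k H k *%R gr gr_lin.
HB.instance Definition _ := GRing.isLinear.Build k H k *%R gl gl_lin.
End Aux.
Arguments gr {k H}.
Arguments gl {k H}.

Lemma sum_mul3 (k : fieldType) (H : algType k) (F : H * H * H -> k) (t u : tens3 H) :
  \sum_(x <- mul3 t u) F x = \sum_(p <- t) \sum_(q <- u)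
     F (p.1.1 * q.1.1, p.1.2 * q.1.2, p.2 * q.2).
Proof. by rewrite /mul3 big_allpairs_dep. Qed.

Lemma ev3_mul3 (k : fieldType) (H : algType k) (f g h : {scalar H}) (t u : tens3 H) :
  ev3 f g h (mul3 t u) = \sum_(p <- t) \sum_(q <- u)
     f (p.1.1 * q.1.1) * g (p.1.2 * q.1.2) * h (p.2 * q.2).
Proof. by rewrite /ev3 /mul3 big_allpairs_dep. Qed.

Lemma ev3_DeltaR (k : fieldType) (H : algType k) (Delta : H -> tens2 H)
  (f g h : {scalar H}) (t : tens2 H) :
  ev3 f g h (DeltaR Delta t) = \sum_(p <- t) \sum_(q <- Delta p.2)
     f p.1 * g q.1 * h q.2.
Proof. by rewrite /ev3 /DeltaR big_flatten /= big_map; apply eq_bigr => p _; rewrite big_map. Qed.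

Lemma sum_ap (k : fieldType) (A B C : Type) (s : seq A) (t : A -> seq B)
  (E : A -> B -> C) (F : C -> k) :
  \sum_(z <- [seq E x y | x <- s, y <- t x]) F z = \sum_(x <- s) \sum_(y <- t x) F (E x y).
Proof. by rewrite big_allpairs_dep. Qed.

Lemma exch3 (k : fieldType) (A B C : Type) (r : seq A) (s : A -> seq B) (t : seq C)
  (F : A -> B -> C -> k) :
  \sum_(a <- r) \sum_(b <- s a) \sum_(c <- t) F a b c =
  \sum_(c <- t) \sum_(a <- r) \sum_(b <- s a) F a b c.
Proof.
transitivity (\sum_(a <- r) \sum_(c <- t) \sum_(b <- s a) F a b c).
  by apply eq_bigr => a _; exact: exchange_big.
exact: exchange_big.
Qed.

Arguments exch3 {k A B C}.

Theorem proposition1p4 (k : fieldType) (H : algType k)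
    (Delta : H -> tens2 H) (eps : {scalar H}) (S : {linear H -> H})
    (R : tens2 H) :
  semiquasitriangular Delta eps S R ->
  teq3 (mul3 (mul3 (leg12 R) (leg13 R)) (leg23 R))
       (mul3 (mul3 (leg23 R) (leg13 R)) (leg12 R)).
Proof.
move=> [_ [_ [_ [_ [H2 [H3 _]]]]]] f g h.
have L : ev3 f g h (mul3 (mul3 (leg12 R) (leg13 R)) (leg23 R)) =
  \sum_(r <- R) \sum_(s <- R) \sum_(t <- R) f (r.1*s.1) * g (r.2*t.1) * h (s.2*t.2).
  rewrite ev3_mul3 sum_mul3 /leg12 big_map. apply eq_bigr => r _.
  rewrite /leg13 big_map; apply eq_bigr => s _.
  rewrite /leg23 big_map; apply eq_bigr => t _ /=.
  by rewrite !mulr1 !mul1r.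
have Rt : ev3 f g h (mul3 (mul3 (leg23 R) (leg13 R)) (leg12 R)) =
  \sum_(r <- R) \sum_(s <- R) \sum_(t <- R) f (r.1*s.1) * g (t.1*s.2) * h (t.2*r.2).
  rewrite ev3_mul3 sum_mul3 /leg23 big_map exchange_big /= /leg13 big_map.
  apply eq_bigr => r _; rewrite exchange_big /= /leg12 big_map.
  apply eq_bigr => s _; apply eq_bigr => t _ /=.
  by rewrite !mulr1 !mul1r.
rewrite L Rt.
have K1 : forall t : H * H,
  \sum_(r <- R) \sum_(b <- Delta r.2) f r.1 * g (b.2 * t.1) * h (b.1 * t.2) =
  \sum_(r <- R) \sum_(s <- R) f (r.1 * s.1) * g (r.2 * t.1) * h (s.2 * t.2).
  move=> t; have := H2 f (gr h t.2) (gr g t.1); rewrite ev3_DeltaR /ev3 sum_ap => E.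
  transitivity (\sum_(r <- R) \sum_(b <- Delta r.2) f r.1 * gr h t.2 b.1 * gr g t.1 b.2).
    by apply eq_bigr => r _; apply eq_bigr => b _; rewrite /gr mulrAC.
  apply: (etrans E); apply eq_bigr => r _; apply eq_bigr => b _; by rewrite /gr /= mulrAC.
have K2 : forall t : H * H,
  \sum_(r <- R) \sum_(b <- Delta r.2) f r.1 * g (t.1 * b.1) * h (t.2 * b.2) =
  \sum_(r <- R) \sum_(s <- R) f (r.1 * s.1) * g (t.1 * s.2) * h (t.2 * r.2).
  move=> t; have := H2 f (gl g t.1) (gl h t.2); rewrite ev3_DeltaR /ev3 sum_ap => E.
  exact: E.
have := H3 f g h; rewrite /ev3 !sum_ap /=.
under eq_bigr => r _ do rewrite sum_ap /=.
under [in X in _ = X -> _]eq_bigr => r _ do rewrite sum_ap /=.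
move=> E3.
transitivity (\sum_(t <- R) \sum_(r <- R) \sum_(s <- R)
   f (r.1 * s.1) * g (r.2 * t.1) * h (s.2 * t.2)).
  exact (exch3 R (fun _ => R) R
   (fun r s t => f (r.1 * s.1) * g (r.2 * t.1) * h (s.2 * t.2))).
transitivity (\sum_(t <- R) \sum_(r <- R) \sum_(b <- Delta r.2)
   f r.1 * g (b.2 * t.1) * h (b.1 * t.2)).
  by apply eq_bigr => t _; symmetry; exact: K1.
apply: (etrans (esym (exch3 R (fun r => Delta r.2) R
   (fun r b t => f r.1 * g (b.2 * t.1) * h (b.1 * t.2))))).
apply: (etrans E3).
apply: (etrans (exch3 R (fun r => Delta r.2) R
   (fun r b t => f r.1 * g (t.1 * b.1) * h (t.2 * b.2)))).
transitivity (\sum_(t <- R) \sum_(r <- R) \sum_(s <- R)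
   f (r.1 * s.1) * g (t.1 * s.2) * h (t.2 * r.2)).
  by apply eq_bigr => t _; exact: K2.
exact: (esym (exch3 R (fun _ => R) R
   (fun r s t => f (r.1 * s.1) * g (t.1 * s.2) * h (t.2 * r.2)))).
Qed.
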